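(* Let $H=\sum_ic_iP_i$ be a Pauli Hamiltonian, $|\psi\rangle$ a state, $\mathcal{G}=(G^{[1]},\dots,G^{[m]})$ an overlapped grouping of $H$ and $M_1,\dots,M_m$ positive shot counts. Assume (1) the shot batches of different groups are independent, and (2) for every group $G^{[j]}$ and all distinct $P_i,P_k\in G^{[j]}$, $\mathrm{Cov}(\overline{\langle P_i\rangle}_{(j)},\overline{\langle P_k\rangle}_{(j)})=0$. Then among all unbiased energy estimators $\overline{E}_{\mathcal{G}}(w)=\sum_ic_i\sum_{j\in\Gamma(i)}w_{i,j}\overline{\langle P_i\rangle}_{(j)}$ with $\sum_{j\in\Gamma(i)}w_{i,j}=1$ for every $i$, the minimum variance is attained by the weights $w_{i,j}=M_j/\sum_{k\in\Gamma(i)}M_k$.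
   Context: A Pauli Hamiltonian is $H=\sum_{i=1}^Nc_iP_i$ with real nonzero $c_i$ and distinct $n$-qubit Pauli strings. An overlapped grouping is a list of sets of mutually commuting operators from $\{P_1,\dots,P_N\}$ whose union is $\{P_1,\dots,P_N\}$ (not necessarily disjoint). Group $G^{[j]}$ is measured in $M_j$ independent shots, each shot giving simultaneous $\pm1$ outcomes of all its operators with the Born-rule distribution for $|\psi\rangle$; $\overline{\langle P_i\rangle}_{(j)}$ is the sample mean of the outcomes of $P_i$ over those $M_j$ shots (variance $(1-\langle P_i\rangle^2)/M_j$). $\Gamma(i)=\{j:P_i\in G^{[j]}\}$. *)

(* Defs.v *)
From mathcomp Require Import all_boot all_order all_algebra.
Set Implicit Arguments. Unset Strict Implicit. Unset Printing Implicit Defensive.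
Import Order.TTheory GRing.Theory Num.Theory.
Local Open Scope ring_scope.

(** Pauli strings on n qubits: each letter in 'I_4 with 0 = I, 1 = X, 2 = Y, 3 = Z. *)
Definition pauli (n : nat) := n.-tuple 'I_4.

Definition pauli_commute (n : nat) (P Q : pauli n) : bool :=
  ~~ odd #|[set k : 'I_n | (tnth P k != ord0) && (tnth Q k != ord0)
                            && (tnth P k != tnth Q k)]|.

Definition overlapped_grouping (n N m : nat) (Ps : 'I_N -> pauli n)
  (G : 'I_m -> {set 'I_N}) : Prop :=
  (forall j, forall i k, i \in G j -> k \in G j -> pauli_commute (Ps i) (Ps k))
  /\ (forall i, exists j, i \in G j).

Section FinProb.
Variables (R : realFieldType) (T : finType).

Definition is_distr (p : T -> R) : Prop :=
  (forall t, 0 <= p t) /\ \sum_t p t = 1.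

Definition Prob (p : T -> R) (A : pred T) : R := \sum_(t | A t) p t.
Definition Ex (p : T -> R) (X : T -> R) : R := \sum_t p t * X t.
Definition Cov (p : T -> R) (X Y : T -> R) : R :=
  Ex p (fun t => (X t - Ex p X) * (Y t - Ex p Y)).
Definition Var (p : T -> R) (X : T -> R) : R := Cov p X X.

(** Mutual independence of the random vectors
    (Xbar i j)_{i in G j}, one vector per group j. *)
Definition groups_independent (N m : nat) (p : T -> R) (G : 'I_m -> {set 'I_N})
  (Xbar : 'I_N -> 'I_m -> T -> R) : Prop :=
  forall A : 'I_m -> 'I_N -> pred R,
    Prob p (fun t => [forall j, [forall i, (i \in G j) ==> A j i (Xbar i j t)]])
    = \prod_j Prob p (fun t => [forall i, (i \in G j) ==> A j i (Xbar i j t)]).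
End FinProb.

Definition estimator (R : realFieldType) (T : finType) (N m : nat)
  (c : 'I_N -> R) (G : 'I_m -> {set 'I_N}) (w : 'I_N -> 'I_m -> R)
  (Xbar : 'I_N -> 'I_m -> T -> R) : T -> R :=
  fun t => \sum_i c i * \sum_(j | i \in G j) w i j * Xbar i j t.

Definition w_opt (R : realFieldType) (N m : nat) (M : 'I_m -> nat)
  (G : 'I_m -> {set 'I_N}) : 'I_N -> 'I_m -> R :=
  fun i j => (M j)%:R / \sum_(k | i \in G k) (M k)%:R.

(* Main.v *)
Require Import Defs.
From mathcomp Require Import all_boot all_order all_algebra ring lra.
Import Order.TTheory GRing.Theory Num.Theory.
Local Open Scope ring_scope.

Section H.
Variables (R : realFieldType) (T : finType) (p : T -> R).

Lemma eq_Ex (X Y : T -> R) : (forall t, X t = Y t) -> Ex p X = Ex p Y.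
Proof. by move=> h; rewrite /Ex; apply: eq_bigr => t _; rewrite h. Qed.

Lemma Ex_sum (I : finType) (P : pred I) (F : I -> T -> R) :
  Ex p (fun t => \sum_(u | P u) F u t) = \sum_(u | P u) Ex p (F u).
Proof.
rewrite /Ex; under eq_bigr do rewrite mulr_sumr.
exact: exchange_big.
Qed.

Lemma Ex_scale a (X : T -> R) : Ex p (fun t => a * X t) = a * Ex p X.
Proof. by rewrite /Ex mulr_sumr; apply: eq_bigr => t _; rewrite mulrCA. Qed.

Lemma Cov_lin (I : finType) (P : pred I) (a : I -> R) (X : I -> T -> R) :
  Var p (fun t => \sum_(u | P u) a u * X u t) =
  \sum_(u | P u) \sum_(v | P v) a u * a v * Cov p (X u) (X v).
Proof.
rewrite /Var /Cov Ex_sum.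
under eq_bigr do rewrite Ex_scale.
rewrite (@eq_Ex _ (fun t => \sum_(u | P u) \sum_(v | P v) a u * a v * ((X u t - Ex p (X u)) * (X v t - Ex p (X v))))); last first.
  move=> t.
  rewrite -sumrB mulr_suml; apply: eq_bigr => u _.
  rewrite mulr_sumr; apply: eq_bigr => v _.
  rewrite -!mulrBr; ring.
rewrite Ex_sum; apply: eq_bigr => u _.
rewrite Ex_sum; apply: eq_bigr => v _.
by rewrite Ex_scale.
Qed.

Lemma part (Z : T -> R) (F : T -> R) :
  \sum_t F t = \sum_(a <- undup (map Z (enum T))) \sum_t (Z t == a)%:R * F t.
Proof.
rewrite exchange_big /=; apply: eq_bigr => t _.
rewrite (bigD1_seq (Z t)) /= ?undup_uniq ?mem_undup ?map_f ?mem_enum //.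
rewrite eqxx mul1r big1 ?addr0 // => a.
by rewrite eq_sym => /negbTE ->; rewrite mul0r.
Qed.

Lemma ProbE (A : pred T) : Prob p A = \sum_t (A t)%:R * p t.
Proof.
rewrite /Prob big_mkcond; apply: eq_bigr => t _.
by case: (A t); rewrite ?mul1r ?mul0r.
Qed.

Lemma Ex_dist (Z : T -> R) :
  Ex p Z = \sum_(a <- undup (map Z (enum T))) a * Prob p (fun t => Z t == a).
Proof.
rewrite /Ex (part Z); apply: eq_big_seq => a _.
rewrite ProbE mulr_sumr; apply: eq_bigr => t _.
by case: eqP => [->|_]; rewrite ?mul1r ?mul0r ?mulr0 // mulrC.
Qed.

Lemma Ex_indep (X Y : T -> R) :
  (forall a b, Prob p (fun t => (X t == a) && (Y t == b)) =
     Prob p (fun t => X t == a) * Prob p (fun t => Y t == b)) ->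
  Ex p (fun t => X t * Y t) = Ex p X * Ex p Y.
Proof.
move=> hind.
rewrite (Ex_dist X) (Ex_dist Y) mulr_suml.
rewrite /Ex (part X); apply: eq_big_seq => a _.
rewrite (part Y) mulr_sumr; apply: eq_big_seq => b _.
rewrite mulrACA -hind ProbE mulr_sumr; apply: eq_bigr => t _.
by case: (eqP (x := X t)) => [->|_]; case: (eqP (x := Y t)) => [->|_] /=; ring.
Qed.

Lemma Cov_E (hp : \sum_t p t = 1) (X Y : T -> R) :
  Cov p X Y = Ex p (fun t => X t * Y t) - Ex p X * Ex p Y.
Proof.
rewrite /Cov {1}/Ex.
rewrite (eq_bigr (fun t => p t * (X t * Y t) - Ex p Y * (p t * X t) - Ex p X * (p t * Y t) + Ex p X * Ex p Y * p t)); last first.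
  by move=> t _; ring.
rewrite !big_split /= !sumrN -!mulr_sumr hp /Ex; ring.
Qed.
End H.
Lemma key (R : realFieldType) (I : finType) (P : pred I) (M w : I -> R) :
  (forall j, P j -> 0 < M j) -> \sum_(j | P j) w j = 1 ->
  0 < \sum_(j | P j) M j ->
  \sum_(j | P j) (M j / \sum_(k | P k) M k) ^+ 2 / M j <= \sum_(j | P j) w j ^+ 2 / M j.
Proof.
move=> hM hw hS; set S := \sum_(k | P k) M k in hS *.
have S0 : S != 0 by rewrite gt_eqF.
have e1 : \sum_(j | P j) (M j / S) ^+ 2 / M j = S / S ^+ 2.
  rewrite mulr_suml; apply: eq_bigr => j Pj.
  have := hM j Pj; rewrite lt0r => /andP[Mj0 _]; field.
  by rewrite S0 Mj0.
have e2 : \sum_(j | P j) (w j - M j / S) ^+ 2 / M j =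
   \sum_(j | P j) w j ^+ 2 / M j - 2 / S * \sum_(j | P j) w j + S / S ^+ 2.
  rewrite -e1 mulr_sumr -sumrB -big_split /=; apply: eq_bigr => j Pj.
  have := hM j Pj; rewrite lt0r => /andP[Mj0 _]; field.
  by rewrite S0 Mj0.
have ge : 0 <= \sum_(j | P j) (w j - M j / S) ^+ 2 / M j.
  apply: sumr_ge0 => j Pj; apply: divr_ge0; first exact: sqr_ge0.
  exact: ltW (hM j Pj).
rewrite e1; move: ge; rewrite e2 hw.
have -> : 2 / S * 1 = S / S ^+ 2 + S / S ^+ 2 by field.
lra.
Qed.

Lemma indep_pair (R : realFieldType) (T : finType) (p : T -> R) (N m : nat)
  (G : 'I_m -> {set 'I_N}) (Xbar : 'I_N -> 'I_m -> T -> R) :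
  \sum_t p t = 1 -> groups_independent p G Xbar ->
  forall i k j0 j1, j0 != j1 -> i \in G j0 -> k \in G j1 -> forall a b,
  Prob p (fun t => (Xbar i j0 t == a) && (Xbar k j1 t == b)) =
  Prob p (fun t => Xbar i j0 t == a) * Prob p (fun t => Xbar k j1 t == b).
Proof.
move=> hp hind i k j0 j1 hj hi hk a b.
have := hind (fun j i' x => if (j == j0) && (i' == i) then x == a
                  else if (j == j1) && (i' == k) then x == b else true).
have hj' : (j1 == j0) = false by apply/negbTE; rewrite eq_sym.
have -> : Prob p (fun t => [forall j, [forall i', (i' \in G j) ==>
     (if (j == j0) && (i' == i) then Xbar i' j t == a
      else if (j == j1) && (i' == k) then Xbar i' j t == b else true)]])
   = Prob p (fun t => (Xbar i j0 t == a) && (Xbar k j1 t == b)).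
  rewrite /Prob; apply: eq_bigl => t; apply/idP/idP.
    move/forallP => h; apply/andP; split.
      by move: (h j0) => /forallP/(_ i); rewrite hi !eqxx.
    by move: (h j1) => /forallP/(_ k); rewrite hk hj' !eqxx.
  case/andP => ha hb; apply/forallP => j; apply/forallP => i'; apply/implyP => _.
  case: ifP => [/andP[/eqP-> /eqP->] //|_].
  by case: ifP => [/andP[/eqP-> /eqP->] //|_].
move=> ->.
rewrite (bigD1 j0) //= (bigD1 j1) /=; last by rewrite eq_sym hj.
rewrite big1 ?mulr1; last first.
  move=> j /andP[hj0 hj1]; rewrite -hp /Prob; apply: eq_bigl => t.
  apply/forallP => i'; apply/implyP => _.
  by rewrite (negbTE hj0) (negbTE hj1).
congr (_ * _); last first.
  rewrite /Prob; apply: eq_bigl => t; apply/idP/idP.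
    by move/forallP/(_ k); rewrite hk hj' !eqxx.
  move=> hb; apply/forallP => i'; apply/implyP => _.
  rewrite hj' eqxx /=; by case: ifP => [/eqP-> //|_].
rewrite /Prob; apply: eq_bigl => t; apply/idP/idP.
  by move/forallP/(_ i); rewrite hi !eqxx.
move=> ha; apply/forallP => i'; apply/implyP => _.
rewrite eqxx /=; case: ifP => [/eqP-> //|_].
by rewrite (negbTE hj).
Qed.

Lemma eq_Var (R : realFieldType) (T : finType) (p : T -> R) (X Y : T -> R) :
  (forall t, X t = Y t) -> Var p X = Var p Y.
Proof.
move=> h; rewrite /Var /Cov (@eq_Ex _ _ p _ _ h); apply: eq_Ex => t; by rewrite h.
Qed.

Theorem lemma1 (R : realFieldType) (n N m : nat)
  (Ps : 'I_N -> pauli n) (c : 'I_N -> R) (G : 'I_m -> {set 'I_N})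
  (M : 'I_m -> nat) (e : 'I_N -> R)
  (T : finType) (p : T -> R) (Xbar : 'I_N -> 'I_m -> T -> R) :
  injective Ps ->
  (forall i, c i != 0) ->
  overlapped_grouping Ps G ->
  (forall j, (0 < M j)%N) ->
  (forall i, -1 <= e i <= 1) ->
  is_distr p ->
  (forall i j, i \in G j -> Ex p (Xbar i j) = e i) ->
  (forall i j, i \in G j -> Var p (Xbar i j) = (1 - e i ^+ 2) / (M j)%:R) ->
  groups_independent p G Xbar ->
  (forall j i k, i \in G j -> k \in G j -> i != k ->
     Cov p (Xbar i j) (Xbar k j) = 0) ->
  (forall i, \sum_(j | i \in G j) w_opt R M G i j = 1) /\
  (forall w : 'I_N -> 'I_m -> R,
     (forall i, \sum_(j | i \in G j) w i j = 1) ->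
     Var p (estimator c G (w_opt R M G) Xbar) <= Var p (estimator c G w Xbar)).
Proof.
move=> _ _ [_ hcover] hM he [_ hp] hex hvar hind hcov.
have Spos : forall i, 0 < \sum_(k | i \in G k) (M k)%:R :> R.
  move=> i; case: (hcover i) => j hj; rewrite (bigD1 j) //=.
  have : 0 <= \sum_(k | (i \in G k) && (k != j)) (M k)%:R :> R.
    by apply: sumr_ge0 => k _; apply: ler0n.
  have : 0 < (M j)%:R :> R by rewrite ltr0n.
  lra.
have VarE : forall w, Var p (estimator c G w Xbar) =
   \sum_i \sum_(j | i \in G j) (c i * w i j) ^+ 2 * ((1 - e i ^+ 2) / (M j)%:R).
  move=> w.
  rewrite (@eq_Var _ _ p _ (fun t => \sum_(u : 'I_N * 'I_m | true && (u.1 \in G u.2))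
      (c u.1 * w u.1 u.2) * Xbar u.1 u.2 t)); last first.
    move=> t; rewrite /estimator.
    under eq_bigr do rewrite mulr_sumr.
    under eq_bigr do under eq_bigr do rewrite mulrA.
    exact: (pair_big_dep xpredT (fun i j => i \in G j) (fun i j => c i * w i j * Xbar i j t)).
  rewrite (@Cov_lin _ _ p _ (fun u => true && (u.1 \in G u.2)) (fun u => c u.1 * w u.1 u.2) (fun u => Xbar u.1 u.2)).
  transitivity (\sum_(u : 'I_N * 'I_m | true && (u.1 \in G u.2))
     (c u.1 * w u.1 u.2) ^+ 2 * ((1 - e u.1 ^+ 2) / (M u.2)%:R)); last first.
    symmetry; exact: (pair_big_dep xpredT (fun i j => i \in G j)
      (fun i j => (c i * w i j) ^+ 2 * ((1 - e i ^+ 2) / (M j)%:R))).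
  apply: eq_bigr => u /andP[_ hu].
  rewrite (bigD1 u) /=; last by rewrite hu.
  rewrite big1 ?addr0; last first.
    move=> v /andP[hv' hvu].
    have hv : v.1 \in G v.2 by move: hv'; case: (v.1 \in G v.2).
    case: (eqVneq u.2 v.2) => h2.
      clear hv'; move: hu hv hvu h2; case: u => [i1 j1]; case: v => [i2 j2] /= hu hv hvu h2.
      rewrite -h2 in hv hvu *.
      rewrite xpair_eqE eqxx andbT in hvu.
      by rewrite (hcov j1 i1 i2 hu hv) ?mulr0 // eq_sym.
    rewrite Cov_E // Ex_indep ?subrr ?mulr0 //.
    by move=> a b; apply: indep_pair.
  have := hvar _ _ hu; rewrite /Var => ->.
  by rewrite expr2.
split.
  move=> i; rewrite /w_opt -mulr_suml divff //.
  by rewrite gt_eqF // Spos.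
move=> w hw; rewrite !VarE; apply: ler_sum => i _.
rewrite (eq_bigr (fun j => c i ^+ 2 * (1 - e i ^+ 2) * ((w_opt R M G i j) ^+ 2 / (M j)%:R)));
  last by move=> j _; rewrite exprMn; ring.
rewrite [X in _ <= X](eq_bigr (fun j => c i ^+ 2 * (1 - e i ^+ 2) * ((w i j) ^+ 2 / (M j)%:R)));
  last by move=> j _; rewrite exprMn; ring.
rewrite -!mulr_sumr; apply: ler_wpM2l.
  have := he i; case/andP => h1 h2; apply: mulr_ge0; first exact: sqr_ge0.
  nra.
rewrite /w_opt; apply: key => //.
by move=> j _; rewrite ltr0n.
Qed.
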